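(* Let $x^*=0\in\Sigma$ be a regular grazing point of order $4$ of an impacting hybrid system $(X,R)$ in local form, and let $\Gamma$ be the orbit of $X$ through $x^*$. Let $\Pi_3=\{x\in\mathbb{R}^n:\ \mathcal{L}_X^3H(x)=0\}$. Then (1) $\Pi_3$ is transverse at $x^*$ to the $(n-1)$-dimensional discontinuity manifold $\Sigma$, and (2) $\Pi_3$ is transverse at $x^*$ to the orbit $\Gamma$.
   Context: Lie derivatives: $\mathcal{L}_XG(x)=\nabla G(x)\cdot X(x)$ and $\mathcal{L}_X^kH=\mathcal{L}_X(\mathcal{L}_X^{k-1}H)$. An impacting hybrid system $(X,R)$ in local form consists of: $\Sigma=\{x:H(x)=0\}$ with $0$ a regular value of the smooth function $H$, $S^+=\{x:H(x)>0\}$, the ODE $x'=X(x)$ for $x\in S^+$ with $X$ a $\mathcal{C}^3$ vector field on $\mathbb{R}^n$, and a reset map $R:\Sigma\to\Sigma$, $R(x)=x+W(x)\mathcal{L}_XH(x)$ with $W:\mathbb{R}^n\to\mathbb{R}^n$ smooth. A point $x^*\in\Sigma$ is a regular grazing point of order $4$ if $\mathcal{L}_XH(x^* )=\mathcal{L}_X^2H(x^* )=\mathcal{L}_X^3H(x^* )=0$ and $\mathcal{L}_X^4H(x^* )\neq0$. *)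

(* Defs.v *)
From HB Require Import structures.
From mathcomp Require Import all_boot all_order all_algebra.
From mathcomp Require Import all_classical all_reals all_analysis.
Set Implicit Arguments. Unset Strict Implicit. Unset Printing Implicit Defensive.
Import Order.TTheory GRing.Theory Num.Theory.
Import numFieldNormedType.Exports.
Local Open Scope ring_scope.

(* Class C^k on a finite-dimensional normed space: C^0 = continuous,
   C^(k+1) = differentiable everywhere and every directional derivative
   x |-> Df(x)v is C^k (equivalent to the usual C^(k+1) in finite dimension). *)
Fixpoint Ck {R : realType} {V W : normedModType R} (k : nat) (f : V -> W) : Prop :=
  match k with
  | 0 => continuous f
  | k'.+1 => (forall x, differentiable f x) /\ forall v : V, Ck k' (fun x => derive f x v)
  end.

Definition smooth {R : realType} {V W : normedModType R} (f : V -> W) : Prop :=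
  forall k, Ck k f.

Definition LieD {R : realType} {n : nat} (X : 'rV[R]_n -> 'rV[R]_n)
  (G : 'rV[R]_n -> R) : 'rV[R]_n -> R :=
  fun x => derive G x (X x).

Definition LieDn {R : realType} {n : nat} (X : 'rV[R]_n -> 'rV[R]_n) (k : nat)
  (G : 'rV[R]_n -> R) : 'rV[R]_n -> R := iter k (LieD X) G.

Definition regular_value {R : realType} {n : nat} (H : 'rV[R]_n -> R) (c : R) : Prop :=
  forall x, H x = c -> forall y : R, exists v, 'd H x v = y.

Definition reset_map {R : realType} {n : nat} (X W : 'rV[R]_n -> 'rV[R]_n)
  (H : 'rV[R]_n -> R) (x : 'rV[R]_n) : 'rV[R]_n :=
  x + LieD X H x *: W x.

Definition impacting_hybrid_system {R : realType} {n : nat}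
  (H : 'rV[R]_n -> R) (X W : 'rV[R]_n -> 'rV[R]_n) : Prop :=
  smooth H /\ regular_value H 0 /\ Ck 3 X /\ smooth W /\
  (forall x, H x = 0 -> H (reset_map X W H x) = 0).

Definition regular_grazing_point4 {R : realType} {n : nat}
  (H : 'rV[R]_n -> R) (X : 'rV[R]_n -> 'rV[R]_n) (xs : 'rV[R]_n) : Prop :=
  H xs = 0 /\
  LieDn X 1 H xs = 0 /\ LieDn X 2 H xs = 0 /\ LieDn X 3 H xs = 0 /\
  LieDn X 4 H xs != 0.

Definition transverse_hypersurfaces {R : realType} {n : nat}
  (F G : 'rV[R]_n -> R) (x : 'rV[R]_n) : Prop :=
  F x = 0 /\ G x = 0 /\
  (forall y : R, exists v, 'd F x v = y) /\
  (forall y : R, exists v, 'd G x v = y) /\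
  forall w : 'rV[R]_n, exists u v,
    'd F x u = 0 /\ 'd G x v = 0 /\ w = u + v.

Definition transverse_to_orbit {R : realType} {n : nat}
  (F : 'rV[R]_n -> R) (X : 'rV[R]_n -> 'rV[R]_n) (x : 'rV[R]_n) : Prop :=
  F x = 0 /\
  (forall y : R, exists v, 'd F x v = y) /\
  forall w : 'rV[R]_n, exists u (t : R), 'd F x u = 0 /\ w = u + t *: X x.

(* Main.v *)
Require Import Defs.
From HB Require Import structures.
From mathcomp Require Import all_boot all_order all_algebra.
From mathcomp Require Import all_classical all_reals all_analysis.
Import Order.TTheory GRing.Theory Num.Theory.
Import numFieldNormedType.Exports.
Local Open Scope ring_scope.

Section Aux.
Context {R : realType} {V : normedModType R}.

Lemma Ck_ext k (f g : V -> R) : f = g -> Ck k f -> Ck k g.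
Proof. by move->. Qed.

Lemma Ck_S {W : normedModType R} k (f : V -> W) : Ck k.+1 f -> Ck k f.
Proof.
elim: k f => [|k IH] f /= [df Df].
  by move=> x; apply: differentiable_continuous.
by split=> // v; apply: IH; apply: Df.
Qed.

Lemma Ck_cst k (c : R) : Ck k (fun _ : V => c).
Proof.
elim: k c => [|k IH] c /=; first by move=> x; apply: cst_continuous.
split=> [x|v]; first exact: differentiable_cst.
apply: (Ck_ext _ (fun _ => 0)); last exact: IH.
by apply/funext => x; rewrite (derive_cst c).
Qed.

Lemma Ck_add k (f g : V -> R) : Ck k f -> Ck k g -> Ck k (fun x => f x + g x).
Proof.
elim: k f g => [|k IH] f g /=.
  by move=> cf cg x; exact: (continuousD (cf x) (cg x)).
move=> [df Df] [dg Dg]; split=> [x|v].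
  exact: (differentiableD (df x) (dg x)).
apply: (Ck_ext _ (fun x => derive f x v + derive g x v)); last exact: IH.
apply/funext => x; rewrite (deriveD (f:=f) (g:=g)) //; exact: diff_derivable.
Qed.

Lemma Ck_mul k (f g : V -> R) : Ck k f -> Ck k g -> Ck k (fun x => f x * g x).
Proof.
elim: k f g => [|k IH] f g /=.
  by move=> cf cg x; exact: (continuousM (cf x) (cg x)).
move=> [df Df] [dg Dg]; split=> [x|v].
  exact: (differentiableM (df x) (dg x)).
apply: (Ck_ext _ (fun x => f x * derive g x v + g x * derive f x v)).
  apply/funext => x; rewrite (deriveM (f:=f) (g:=g)) //; exact: diff_derivable.
apply: Ck_add; apply: IH => //; apply: Ck_S; split => //.
Qed.

Lemma Ck_sum k n (F : 'I_n -> V -> R) : (forall i, Ck k (F i)) ->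
  Ck k (fun x => \sum_(i < n) F i x).
Proof.
move=> HF; rewrite -fct_sumE.
elim/big_ind: _ => //; first exact: (Ck_cst k 0).
by move=> f g; apply: Ck_add.
Qed.


Lemma Ck_coord k m (X : V -> 'rV[R]_m) (i : 'I_m) :
  Ck k X -> Ck k (fun x => X x 0 i).
Proof.
have cl : linear (fun u : 'rV[R]_m => u 0 i).
  by move=> a u w; rewrite !mxE.
pose L : {linear 'rV[R]_m -> R} := HB.pack (fun u : 'rV[R]_m => u 0 i)
   (GRing.isLinear.Build _ _ _ _ _ cl).
have Lc : continuous L by exact: (@coord_continuous R 1 m 0 i).
have LE u : L u = u 0 i by [].
elim: k X => [|k IH] X /=.
  by move=> cX x; apply: (continuous_comp (cX x) (Lc (X x))).
move=> [dX DX]; split=> [x|v].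
  have -> : (fun x => X x 0 i) = L \o X by [].
  have h1 := linear_differentiable (X x) Lc.
  have h2 := differentiable_comp (dX x) h1.
  exact: h2.
apply: (Ck_ext _ (fun x => derive X x v 0 i)); last exact: IH.
apply/funext => x.
have -> : (fun x => X x 0 i) = L \o X by [].
have dL := linear_differentiable (X x) Lc.
have dLX := differentiable_comp (dX x) dL.
rewrite (deriveE v dLX) (deriveE v (dX x)) (diff_comp (dX x) dL).
by rewrite /comp (diff_lin (X x) Lc).
Qed.

End Aux.

Lemma Ck_LieD {R : realType} {n : nat} {k : nat} (G : 'rV[R]_n -> R) (X : 'rV[R]_n -> 'rV[R]_n) :
  Ck k.+1 G -> Ck k X -> Ck k (LieD X G).
Proof.
move=> [dG DG] cX.
apply: (Ck_ext _ (fun x => \sum_(i < n) X x 0 i * derive G x (delta_mx 0 i))).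
  apply/funext => x; rewrite /LieD (deriveE _ (dG x)).
  have -> : 'd G x (X x) = 'd G x (\sum_(i < n) X x 0 i *: delta_mx 0 i).
    by rewrite -row_sum_delta.
  rewrite linear_sum; apply: eq_bigr => i _.
  by rewrite linearZ /= (deriveE _ (dG x)).
apply: Ck_sum => i; apply: Ck_mul; [exact: Ck_coord | exact: DG].
Qed.

Theorem proposition1 (R : realType) (n : nat)
  (H : 'rV[R]_n -> R) (X W : 'rV[R]_n -> 'rV[R]_n) :
  impacting_hybrid_system H X W ->
  regular_grazing_point4 H X 0 ->
  transverse_hypersurfaces (LieDn X 3 H) H 0 /\
  transverse_to_orbit (LieDn X 3 H) X 0.
Proof.
move=> [sH [rH [cX3 _]]] [H0 [L1 [L2 [L3 L4]]]].
have c1 : Ck 3 (LieDn X 1 H) := Ck_LieD _ _ (sH 4%N) cX3.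
have c2 : Ck 2 (LieDn X 2 H) := Ck_LieD _ _ c1 (Ck_S _ _ cX3).
have c3 : Ck 1 (LieDn X 3 H) := Ck_LieD _ _ c2 (Ck_S _ _ (Ck_S 2 _ cX3)).
have d3 : differentiable (LieDn X 3 H) 0 := c3.1 0.
have dH : differentiable H 0 := (sH 1%N).1 0.
have a0 : 'd (LieDn X 3 H) 0 (X 0) = LieDn X 4 H 0.
  by rewrite -deriveE.
have b0 : 'd H 0 (X 0) = 0 by rewrite -deriveE.
move: a0 L4; set F := LieDn X 3 H; set c := LieDn X 4 H 0 => a0 cn0.
have aonto : forall y : R, exists v, 'd F 0 v = y.
  move=> y; exists ((y / c) *: X 0).
  by rewrite linearZ /= a0; exact: (divfK cn0).
have kern : forall w : 'rV[R]_n,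
    'd F 0 (w - ('d F 0 w / c) *: X 0) = 0.
  by move=> w; rewrite linearB linearZ /= a0 -[X in _ - X]/((_ / c) * c) divfK // subrr.
split.
- split; first exact: L3.
  split; first exact: H0.
  split; first exact: aonto.
  split; first exact: (rH 0 H0).
  move=> w; exists (w - ('d F 0 w / c) *: X 0), (('d F 0 w / c) *: X 0).
  split; first exact: kern.
  by rewrite linearZ /= b0 scaler0 subrK.
- split; first exact: L3.
  split; first exact: aonto.
  move=> w; exists (w - ('d F 0 w / c) *: X 0), ('d F 0 w / c).
  by split; [exact: kern | rewrite subrK].
Qed.
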